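(* Let $P$ be an $n\times n$ sign pattern and $A\in\mathcal{Q}(P)$. If $A$ has the nSSP, then for every superpattern $P'$ of $P$ there exists $A'\in\mathcal{Q}(P')$ such that $A'$ is similar to $A$ and $A'$ has the nSSP.
   Context: A sign pattern is an array with entries in $\{+,-,0\}$; its qualitative class $\mathcal{Q}(P)$ is the set of real matrices of the same size whose entries have the signs prescribed by $P$. $P'$ is a superpattern of $P$ if $P'$ is obtained from $P$ by replacing some (possibly none) of its $0$ entries by $+$ or $-$. $\circ$ is the entrywise product. A real $n\times n$ matrix $A$ has the non-symmetric strong spectral property (nSSP) if $X=O$ is the only real $n\times n$ matrix with $A\circ X=O$ and $AX^\top-X^\top A=O$. *)

(* Defs.v *)
From HB Require Import structures.
From mathcomp Require Import all_boot all_order all_algebra.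
From mathcomp Require Import reals.
Set Implicit Arguments. Unset Strict Implicit. Unset Printing Implicit Defensive.
Import Order.TTheory GRing.Theory Num.Theory.
Local Open Scope ring_scope.

Inductive sign := Pos | Neg | Zero.

Definition sign_of {R : realType} (x : R) : sign :=
  if 0 < x then Pos else if x < 0 then Neg else Zero.

Definition in_qual_class {R : realType} {n : nat}
  (P : 'M[sign]_n) (A : 'M[R]_n) : Prop :=
  forall i j, sign_of (A i j) = P i j.

Definition superpattern {n : nat} (P P' : 'M[sign]_n) : Prop :=
  forall i j, P i j <> Zero -> P' i j = P i j.

Definition hadamard {R : realType} {n : nat} (A X : 'M[R]_n) : 'M[R]_n :=
  \matrix_(i, j) (A i j * X i j).

Definition nSSP {R : realType} {n : nat} (A : 'M[R]_n) : Prop :=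
  forall X : 'M[R]_n,
    hadamard A X = 0 -> A *m X^T - X^T *m A = 0 -> X = 0.

Definition similar_real {R : realType} {n : nat} (A B : 'M[R]_n) : Prop :=
  exists S : 'M[R]_n, S \in unitmx /\ B = S *m A *m invmx S.

(* Main.v *)
Require Import Defs.
From HB Require Import structures.
From mathcomp Require Import all_boot all_order all_algebra.
From mathcomp Require Import all_classical all_reals.
From mathcomp Require Import topology normedtype sequences.
From mathcomp Require Import ring lra.
Import Order.TTheory GRing.Theory Num.Theory.
Import numFieldNormedType.Exports.
Local Open Scope classical_set_scope.
Local Open Scope ring_scope.
Set Warnings "-redundant-canonical-projection".
Section Norms.
Variable R : realType.

Lemma mx_entry_le m p (X : 'M[R]_(m,p)) i j : `|X i j| <= `|X|.
Proof.
rewrite [leRHS]/Num.Def.normr /= mx_normrE; apply/bigmax_geP; right => /=.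
by exists (i, j).
Qed.

Lemma mx_norm_le m p (X : 'M[R]_(m,p)) c : 0 <= c ->
  (forall i j, `|X i j| <= c) -> `|X| <= c.
Proof.
move=> c0 H; rewrite [leLHS]/Num.Def.normr /= mx_normrE.
by apply: bigmax_le => // -[i j] _; apply: H.
Qed.

Lemma mulmx_norm m p q (X : 'M[R]_(m,p)) (Y : 'M[R]_(p,q)) :
  `|X *m Y| <= p%:R * `|X| * `|Y|.
Proof.
apply: mx_norm_le; first by rewrite !mulr_ge0.
move=> i j; rewrite mxE.
apply: (le_trans (ler_norm_sum _ _ _)).
apply: (le_trans (y := \sum_(l < p) (`|X| * `|Y|))).
  apply: ler_sum => l _; rewrite normrM.
  by apply: ler_pM => //; apply: mx_entry_le.
by rewrite sumr_const card_ord ?mulr1 -mulrA mulr_natl.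
Qed.

End Norms.
Section Gop.
Variables (R : realType) (n : nat).
Implicit Types (A Y X K B Z : 'M[R]_n).

Definition mask A Y : 'M[R]_n := \matrix_(i,j) (if A i j == 0 then 0 else Y i j).
Definition Lst A Y := Y *m A^T - A^T *m Y.
Definition Gop A Y := Lst A Y *m A - A *m Lst A Y + mask A Y.

Lemma mask_linear A : linear (mask A).
Proof.
move=> a u v; apply/matrixP => i j; rewrite !mxE.
by case: (A i j == 0); rewrite ?mulr0 ?addr0.
Qed.

Lemma Lst_linear A : linear (Lst A).
Proof.
move=> a u v; rewrite /Lst mulmxDl mulmxDr -scalemxAl -scalemxAr.
by rewrite scalerDr scalerN opprD addrACA.
Qed.

Lemma Gop_linear A : linear (Gop A).
Proof.
move=> a u v; rewrite /Gop Lst_linear mask_linear.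
rewrite mulmxDl mulmxDr -scalemxAl -scalemxAr.
rewrite !scalerDr scalerN.
set X1 := Lst A u *m A; set X2 := Lst A v *m A; set X3 := A *m Lst A u.
set X4 := A *m Lst A v; set X5 := mask A u; set X6 := mask A v.
apply/matrixP => i j; rewrite !mxE; ring.
Qed.

HB.instance Definition _ A :=
  GRing.isLinear.Build R 'M[R]_n 'M[R]_n *:%R (Gop A) (Gop_linear A).

Lemma trmxB' (X Y : 'M[R]_n) : (X - Y)^T = X^T - Y^T.
Proof. by apply/matrixP => i j; rewrite !mxE. Qed.

Lemma tr_tmul Y X : \tr (Y^T *m X) = \sum_i \sum_k Y k i * X k i.
Proof.
rewrite /mxtrace; apply: eq_bigr => i _; rewrite mxE.
by apply: eq_bigr => k _; rewrite mxE.
Qed.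

Lemma tr_sq_ge0 Z : 0 <= \tr (Z^T *m Z).
Proof.
rewrite tr_tmul; apply: sumr_ge0 => i _; apply: sumr_ge0 => k _.
by rewrite -expr2 sqr_ge0.
Qed.

Lemma tr_sq_eq0 Z : \tr (Z^T *m Z) = 0 -> Z = 0.
Proof.
rewrite tr_tmul => /eqP; rewrite psumr_eq0; last first.
  by move=> i _; apply: sumr_ge0 => k _; rewrite -expr2 sqr_ge0.
move=> /allP H; apply/matrixP => k i; rewrite mxE.
have /implyP := H i (mem_index_enum _) => /(_ isT).
rewrite psumr_eq0; last by move=> ? _; rewrite -expr2 sqr_ge0.
move=> /allP /(_ k (mem_index_enum _)) /implyP /(_ isT).
by rewrite mulf_eq0 orbb => /eqP.
Qed.

Lemma dot_comm Y K B :
  \tr (Y^T *m (K *m B - B *m K)) = \tr ((B *m Y^T - Y^T *m B) *m K).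
Proof.
rewrite mulmxBr mulmxBl !raddfB /=; congr (_ - _).
  by rewrite mulmxA mxtrace_mulC mulmxA.
by rewrite mulmxA.
Qed.

Lemma dot_mask A Y : \tr (Y^T *m mask A Y) = \tr ((mask A Y)^T *m mask A Y).
Proof.
rewrite !tr_tmul; apply: eq_bigr => i _; apply: eq_bigr => k _; rewrite !mxE.
by case: (A k i == 0); rewrite ?mulr0.
Qed.

Lemma Gop_inj A Y : nSSP A -> Gop A Y = 0 -> Y = 0.
Proof.
move=> HA G0.
have E : \tr (Y^T *m Gop A Y) =
   \tr ((Lst A Y)^T *m Lst A Y) + \tr ((mask A Y)^T *m mask A Y).
  rewrite /Gop mulmxDr mxtraceD dot_comm dot_mask; congr (_ + _).
  by rewrite /Lst trmxB' !trmx_mul !trmxK.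
move: E; rewrite G0 mulmx0 raddf0 => /esym /eqP.
rewrite paddr_eq0 ?tr_sq_ge0 // => /andP[/eqP /tr_sq_eq0 HL /eqP /tr_sq_eq0 HM].
apply: HA.
  apply/matrixP => i j; move/matrixP: HM => /(_ i j); rewrite !mxE.
  by case: eqP => [->|_ ->]; rewrite ?mul0r ?mulr0.
by move: HL; rewrite /Lst => /(congr1 trmx); rewrite trmxB' !trmx_mul !trmxK trmx0.
Qed.


Lemma mxvec_norm (X : 'M[R]_n) : `|mxvec X| <= `|X|.
Proof.
apply: mx_norm_le => // i k; rewrite [i]ord1.
by case/mxvec_indexP: k => a b; rewrite mxvecE mx_entry_le.
Qed.

Lemma vec_mx_norm (v : 'rV[R]_(n * n)) : `|vec_mx v| <= `|v|.
Proof. by apply: mx_norm_le => // i j; rewrite mxE mx_entry_le. Qed.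

Lemma Gop_unit A : nSSP A -> lin_mx (Gop A) \in unitmx.
Proof.
move=> HA; rewrite -row_free_unit -kermx_eq0; apply/eqP.
have K0 := mulmx_ker (lin_mx (Gop A)).
apply/row_matrixP => i; rewrite row0.
have : row i (kermx (lin_mx (Gop A))) *m lin_mx (Gop A) = 0.
  by rewrite -row_mul K0 row0.
rewrite mul_rV_lin => /(congr1 vec_mx); rewrite mxvecK linear0.
move=> /(@Gop_inj _ _ HA) /(congr1 mxvec); rewrite vec_mxK => ->.
by rewrite linear0.
Qed.

Lemma Ginv_spec A : nSSP A -> exists (Gi : 'M[R]_n -> 'M[R]_n) (C : R),
  0 < C /\ (forall X, Gop A (Gi X) = X) /\ (forall X Y, Gi X - Gi Y = Gi (X - Y))
  /\ (forall X, `|Gi X| <= C * `|X|).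
Proof.
move=> HA; have U := @Gop_unit _ HA.
pose Lg := lin_mx (Gop A).
exists (fun X => vec_mx (mxvec X *m invmx Lg)), ((n * n)%:R * `|invmx Lg| + 1).
split; first by rewrite ltr_wpDl // mulr_ge0.
split.
  move=> X; rewrite -[LHS]mx_rV_lin -/Lg mulmxKV //. by rewrite mxvecK.
split.
  by move=> X Y; rewrite -linearB /= -mulmxBl -linearB.
move=> X; apply: (le_trans (vec_mx_norm _)).
apply: (le_trans (@mulmx_norm _ _ _ _ (mxvec X) (invmx Lg))).
rewrite mulrAC mulrDl mul1r ler_wpDr //.
by rewrite ler_wpM2l ?mulr_ge0 // mxvec_norm.
Qed.


HB.instance Definition _ A :=
  GRing.isLinear.Build R 'M[R]_n 'M[R]_n *:%R (Lst A) (Lst_linear A).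
HB.instance Definition _ A :=
  GRing.isLinear.Build R 'M[R]_n 'M[R]_n *:%R (mask A) (mask_linear A).

Lemma trmx_norm X : `|X^T| <= `|X|.
Proof. by apply: mx_norm_le => // i j; rewrite mxE mx_entry_le. Qed.

Lemma mask_norm A Y : `|mask A Y| <= `|Y|.
Proof.
apply: mx_norm_le => // i j; rewrite mxE.
by case: (A i j == 0); rewrite ?normr0 ?mx_entry_le.
Qed.

Lemma normB_le (X Y : 'M[R]_n) : `|X - Y| <= `|X| + `|Y|.
Proof. by rewrite (le_trans (ler_normD _ _)) // normrN. Qed.

Lemma Lst_norm A Y : `|Lst A Y| <= 2 * n%:R * `|A| * `|Y|.
Proof.
rewrite /Lst (le_trans (normB_le _ _)) //.
have h1 := @mulmx_norm _ _ _ _ Y A^T.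
have h2 := @mulmx_norm _ _ _ _ A^T Y.
have h3 := trmx_norm A.
have hn : 0 <= n%:R :> R by [].
have hY : 0 <= `|Y| by [].
have h4 : n%:R * `|Y| * `|A^T| <= n%:R * `|Y| * `|A|.
  by rewrite ler_wpM2l // mulr_ge0.
have h5 : n%:R * `|A^T| * `|Y| <= n%:R * `|A| * `|Y|.
  by rewrite ler_wpM2r // ler_wpM2l.
have -> : 2 * n%:R * `|A| * `|Y| = n%:R * `|Y| * `|A| + n%:R * `|A| * `|Y|.
  by ring.
lra.
Qed.

Lemma tr_norm X : `|\tr X| <= n%:R * `|X|.
Proof.
rewrite /mxtrace (le_trans (ler_norm_sum _ _ _)) //.
apply: (le_trans (y := \sum_(i < n) `|X|)).
  by apply: ler_sum => i _; apply: mx_entry_le.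
by rewrite sumr_const card_ord mulr_natl.
Qed.

Lemma sum_ge_term m (F : 'I_m -> R) j : (forall i, 0 <= F i) -> F j <= \sum_i F i.
Proof. by move=> H; rewrite (bigD1 j) //= lerDl sumr_ge0. Qed.

Lemma sq_le_tr Y : `|Y| ^+ 2 <= \tr (Y^T *m Y).
Proof.
have [Y0|] := eqVneq (mx_norm Y) 0.
  by rewrite [`|Y|]/Num.Def.normr /= Y0 expr0n /= tr_sq_ge0.
move=> /mx_norm_neq0 [[a b] /= E].
rewrite [`|Y|]/Num.Def.normr /= E real_normK ?num_real // tr_tmul.
apply: (le_trans _ (@sum_ge_term _ _ b _)); last first.
  by move=> i; apply: sumr_ge0 => k _; rewrite -expr2 sqr_ge0.
apply: (le_trans _ (@sum_ge_term _ _ a _)); first by rewrite expr2.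
by move=> i; rewrite -expr2 sqr_ge0.
Qed.

End Gop.

Definition MX (R : realType) n := 'M[R]_n.
HB.instance Definition _ (R : realType) n := NormedModule.copy (MX R n) 'M[R]_n.
HB.instance Definition _ (R : realType) n := Complete.copy (MX R n) 'M[R]_n.

Lemma fixpt (R : realType) n (f : 'M[R]_n -> 'M[R]_n) (r q : R) :
  0 < r -> 0 <= q -> q < 1 ->
  (forall x, `|x| <= r -> `|f x| <= r) ->
  (forall x y, `|x| <= r -> `|y| <= r -> `|f x - f y| <= q * `|x - y|) ->
  exists x, `|x| <= r /\ x = f x.
Proof.
move=> r0 q0 q1 fU flip.
pose U := closed_ball (0 : MX R n) r.
have UE (x : MX R n) : U x <-> `|x| <= r.
  by rewrite /U closed_ballE //= /closed_ball_ /= sub0r normrN.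
have funS : {homo (f : MX R n -> MX R n) : x / U x >-> U x}.
  by move=> x /UE /fU /UE.
have ctr : is_contraction (mkfun_fun funS).
  exists (@interval_inference.NngNum _ q q0); split => //=.
  move=> [x y] /= [/UE Ux /UE Uy]; exact: flip.
have U0 : U !=set0 by exists 0; apply/UE; rewrite normr0 ltW.
have [p Up fp] := @banach_fixed_point R _ U (mkfun_fun funS) ctr
   (@closed_ball_closed _ _ _ _) U0.
by exists p; split => //; apply/UE.
Qed.

Section Signs.
Variable R : realType.

Definition sgv (s : sign) : R := match s with Pos => 1 | Neg => -1 | Zero => 0 end.

Lemma sign_of_sc (e : R) s : 0 < e -> sign_of (e * sgv s) = s.
Proof.
move=> e0; rewrite /sign_of; case: s => /=.
- by rewrite mulr1 e0.
- by rewrite mulrN1 oppr_gt0 ltNge (ltW e0) /= oppr_lt0 e0.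
- by rewrite mulr0 ltxx.
Qed.

Lemma sign_pert (x f : R) : `|f| < `|x| -> sign_of (x + f) = sign_of x.
Proof.
move=> H; rewrite /sign_of.
have [x0|x0|x0] := ltgtP 0 x.
- have : 0 < x + f.
    move: H; rewrite (gtr0_norm x0) ltr_norml => /andP[h1 h2]; lra.
  by move=> ->.
- have h : x + f < 0.
    move: H; rewrite (ltr0_norm x0) ltr_norml => /andP[h1 h2]; lra.
  have h1 : (0 < x + f) = false by apply/negbTE; rewrite -leNgt ltW.
  have h3 : (0 < x) = false by apply/negbTE; rewrite -leNgt ltW.
  by rewrite h1 h.
- by move: H; rewrite -x0 normr0 ltNge normr_ge0.
Qed.

Lemma sign_of0 : sign_of (0 : R) = Zero.
Proof. by rewrite /sign_of ltxx. Qed.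

Lemma small_eps (c d : R) : 0 < d ->
  exists2 e, 0 < e & forall x, 0 < x -> x <= e -> c * x < d.
Proof.
move=> d0; exists (d / (`|c| + 1)).
  by rewrite divr_gt0 // ltr_wpDl.
move=> x x0 xe.
have hc : c * x <= `|c| * x.
  apply: ler_wpM2r; [exact: ltW | exact: ler_norm].
apply: (le_lt_trans hc).
apply: (le_lt_trans (y := `|c| * (d / (`|c| + 1)))); first by rewrite ler_wpM2l.
rewrite mulrA ltr_pdivrMr ?ltr_wpDl //.
have hc0 : 0 <= `|c| by [].
nra.
Qed.

Lemma small_zero (x c : R) : 0 <= x -> c < 1 -> x <= c * x -> x = 0.
Proof. move=> x0 c1 h; apply/eqP; rewrite eq_le x0 andbT; nra. Qed.

Lemma prod_bound (k a b a' b' : R) : 0 <= k -> 0 <= a -> 0 <= b ->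
  a <= a' -> b <= b' -> k * a * b <= k * a' * b'.
Proof.
move=> k0 a0 b0 ha hb; apply: ler_pM => //; first exact: mulr_ge0.
exact: ler_wpM2l.
Qed.

Lemma sign_of_eq0 (x : R) : sign_of x = Zero -> x = 0.
Proof.
rewrite /sign_of; have [x0|x0|->] := ltgtP 0 x => //.
Qed.

End Signs.

Lemma unit_small (R : realType) n (K : 'M[R]_n) : n%:R * `|K| < 1 -> (1%:M + K) \in unitmx.
Proof.
move=> h; rewrite -row_free_unit -kermx_eq0; apply/eqP.
set X := kermx _.
have E : X *m (1%:M + K) = 0 := mulmx_ker _.
have E2 : X = - (X *m K).
  by apply/eqP; rewrite -addr_eq0 -[X in X + _]mulmx1 -mulmxDr E.
have h2 : `|X| <= (n%:R * `|K|) * `|X|.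
  rewrite {1}E2 normrN (le_trans (@mulmx_norm _ _ _ _ X K)) //.
  by rewrite mulrAC mulrC mulrA.
by apply/normr0_eq0; apply: small_zero h h2.
Qed.

Arguments mask {R n}. Arguments Lst {R n}. Arguments Gop {R n}.
Arguments Ginv_spec {R n A}. Arguments Lst_norm {R n}. Arguments mask_norm {R n}.
Arguments tr_norm {R n}. Arguments sq_le_tr {R n}. Arguments dot_comm {R n}.
Arguments tr_tmul {R n}. Arguments trmx_norm {R n}. Arguments normB_le {R n}.
Arguments mx_entry_le {R m p}. Arguments mulmx_norm {R m p q}.
Arguments sgv {R}. Arguments sign_pert {R}. Arguments small_eps {R}.
Arguments small_zero {R}. Arguments sign_of_sc {R}.
Arguments prod_bound {R}.
Arguments sign_of_eq0 {R}.

Theorem theorem5p3 (R : realType) (n : nat) (P : 'M[sign]_n) (A : 'M[R]_n) :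
  in_qual_class P A -> nSSP A ->
  forall P' : 'M[sign]_n, superpattern P P' ->
  exists A' : 'M[R]_n, in_qual_class P' A' /\ similar_real A A' /\ nSSP A'.
Proof.
move=> hQ HA P' hsup.
have [Gi [C [C0 [GiE [GiB GiN]]]]] := Ginv_spec HA.
pose k : R := n%:R.
have k0 : 0 <= k by [].
pose C1 := (2 * k * `|A| + 1) * C.
have C10 : 0 < C1 by rewrite mulr_gt0 // ltr_wpDl // !mulr_ge0.
have CC1 : C <= C1.
  have h2 : 0 <= 2 * k * `|A| by rewrite !mulr_ge0.
  rewrite /C1; nra.
pose Kf M := Lst A (Gi M).
pose Ff M := - mask A (Gi M).
have KfN M : `|Kf M| <= C1 * `|M|.
  rewrite (le_trans (Lst_norm _ _)) // /C1 -mulrA.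
  have h1 := GiN M.
  have h2 : 0 <= 2 * k * `|A| by rewrite !mulr_ge0.
  have h3 : 0 <= `|Gi M| by [].
  have h4 : 0 <= `|M| by [].
  nra.
have FfN M : `|Ff M| <= C1 * `|M|.
  rewrite normrN (le_trans (mask_norm _ _)) // (le_trans (GiN M)) //.
  by rewrite ler_wpM2r.
have KfB M N : Kf M - Kf N = Kf (M - N) by rewrite /Kf -linearB /= GiB.
have FfB M N : Ff M - Ff N = Ff (M - N).
  by rewrite /Ff -opprD -linearB /= GiB.
have spec M : Kf M *m A - A *m Kf M - Ff M = M.
  by rewrite /Ff opprK -[RHS]GiE.
have FfZ M i j : A i j = 0 -> Ff M i j = 0.
  by move=> h0; rewrite /Ff !mxE h0 eqxx oppr0.
have KfE M : Kf M = Lst A (Gi M) by [].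
clearbody Kf Ff.
pose T : 'M[R]_n := \matrix_(i,j) (if A i j == 0 then sgv (P' i j) else 0).
have TN : `|T| <= 1.
  apply: mx_norm_le => // i j; rewrite mxE.
  case: (A i j == 0); last by rewrite normr0.
  by case: (P' i j) => /=; rewrite ?normr1 ?normrN1 ?normr0.
pose a := \big[Order.min/1]_(p : 'I_n * 'I_n | A p.1 p.2 != 0) `|A p.1 p.2|.
have a0 : 0 < a.
  by apply: lt_bigmin => // -[i j] /= h; rewrite normr_gt0.
have aA i j : A i j != 0 -> a <= `|A i j|.
  by move=> h; apply: (@bigmin_le_cond _ _ _ _ (i, j) (fun p => A p.1 p.2 != 0)).
have [e1 e10 H1] := small_eps (k * C1 * (1 + 4 * C1)) 1 ltr01.
have [e2 e20 H2] := small_eps (2 * k * C1 * (1 + 2 * C1)) 1 ltr01.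
have [e3 e30 H3] := small_eps (2 * C1) a a0.
have [e4 e40 H4] := small_eps (k * (2 * C1)) 1 ltr01.
have [e5 e50 H5] := small_eps (k * k * (2 * k * C1 * (1 + 2 * C1))) 1 ltr01.
pose eps := Order.min e1 (Order.min e2 (Order.min e3 (Order.min e4 e5))).
have eps0 : 0 < eps by rewrite !lt_min e10 e20 e30 e40 e50.
have le1 : eps <= e1 by rewrite !ge_min lexx ?orbT.
have hc1 := H1 eps eps0 le1.
have le2 : eps <= e2 by rewrite !ge_min lexx ?orbT.
have hc2 := H2 eps eps0 le2.
have le3 : eps <= e3 by rewrite !ge_min lexx ?orbT.
have hc3 := H3 eps eps0 le3.
have le4 : eps <= e4 by rewrite !ge_min lexx ?orbT.
have hc4 := H4 eps eps0 le4.
have le5 : eps <= e5 by rewrite !ge_min lexx ?orbT.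
have hc5 := H5 eps eps0 le5.
clear H1 H2 H3 H4 H5.
have nT : `|eps *: T| <= eps.
  rewrite normrZ gtr0_norm //.
  have := normr_ge0 T; nra.
pose h M := eps *: T + (eps *: T + Ff M) *m Kf M.
pose r := 2 * eps.
pose q := k * C1 * (1 + 4 * C1) * eps.
have nS x : `|x| <= r -> `|eps *: T + Ff x| <= eps + C1 * r.
  move=> hx; rewrite (le_trans (ler_normD _ _)) //.
  have := FfN x; have := normr_ge0 x; nra.
have nK x : `|x| <= r -> `|Kf x| <= C1 * r.
  move=> hx; have := KfN x; have := normr_ge0 x; nra.
have [M0 [HM0 FP]] : exists M0, `|M0| <= r /\ M0 = h M0.
  apply: (@fixpt R n h r q).
  - by rewrite /r; nra.
  - have hh : 0 <= 1 + 4 * C1 by have := ltW C10; lra.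
    rewrite /q; apply: mulr_ge0; [apply: mulr_ge0 => //; apply: mulr_ge0 => //; exact: ltW | exact: ltW].
  - by [].
  - move=> x hx; rewrite /h (le_trans (ler_normD _ _)) //.
    have h1 := mulmx_norm (eps *: T + Ff x) (Kf x).
    have h2 := nS x hx; have h3 := nK x hx.
    have h4 : k * `|eps *: T + Ff x| * `|Kf x| <= k * (eps + C1 * r) * (C1 * r).
      exact: prod_bound.
    have h5 : k * (eps + C1 * r) * (C1 * r) = eps * ((2 * k * C1 * (1 + 2 * C1)) * eps).
      by rewrite /r; ring.
    have h6 : eps * ((2 * k * C1 * (1 + 2 * C1)) * eps) <= eps * 1.
      by apply: ler_wpM2l; [exact: ltW | exact: ltW].
    rewrite /r; lra.
  - move=> x y hx hy.
    have E : h x - h y = (eps *: T + Ff x) *m (Kf x - Kf y) + (Ff x - Ff y) *m Kf y.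
      rewrite /h mulmxBr mulmxBl !mulmxDl.
      set u1 := eps *: T; set u2 := u1 *m Kf x; set u3 := Ff x *m Kf x.
      set u4 := u1 *m Kf y; set u5 := Ff y *m Kf y; set u6 := Ff x *m Kf y.
      by apply/matrixP => i j; rewrite !mxE; ring.
    rewrite E KfB FfB (le_trans (ler_normD _ _)) //.
    have h1 := mulmx_norm (eps *: T + Ff x) (Kf (x - y)).
    have h2 := mulmx_norm (Ff (x - y)) (Kf y).
    have h3 := nS x hx; have h4 := nK y hy.
    have h5 := KfN (x - y); have h6 := FfN (x - y).
    have e7 : 0 <= `|x - y| by [].
    have h7 : k * `|eps *: T + Ff x| * `|Kf (x - y)| <= k * (eps + C1 * r) * (C1 * `|x - y|).
      exact: prod_bound.
    have h8 : k * `|Ff (x - y)| * `|Kf y| <= k * (C1 * `|x - y|) * (C1 * r).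
      exact: prod_bound.
    have h9 : k * (eps + C1 * r) * (C1 * `|x - y|) + k * (C1 * `|x - y|) * (C1 * r)
        = q * `|x - y| by rewrite /q /r; ring.
    rewrite -/k in h1 h2; lra.
rewrite /h in FP.
set K := Kf M0 in FP *.
set F := Ff M0 in FP *.
have hK : `|K| <= C1 * r := nK M0 HM0.
have hF : `|F| <= C1 * r.
  have := FfN M0; have := normr_ge0 M0; rewrite -/F; nra.
have hspec : K *m A - A *m K - F = M0 := spec M0.
have hFZ i j : A i j = 0 -> F i j = 0 := FfZ M0 i j.
clearbody K F.
pose D := eps *: T + F.
pose B := A + D.
pose S := 1%:M + K.
have US : S \in unitmx.
  apply: unit_small; rewrite -/k.
  have : k * `|K| <= k * (C1 * r) by apply: ler_wpM2l.
  rewrite /r; lra.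
have BS : B *m S = S *m A.
  rewrite /B /S mulmxDl !mulmxDr !mulmx1 mulmxDl mul1mx.
  have eDK : D *m K = M0 - eps *: T.
    by rewrite FP -/D addrAC subrr add0r.
  have eKA : K *m A = M0 + F + A *m K by rewrite -hspec !subrK.
  rewrite eDK eKA /D.
  set u1 := eps *: T; set u2 := A *m K.
  by apply/matrixP => i j; rewrite !mxE; ring.
have sgnB i j : A i j != 0 -> sign_of (B i j) = sign_of (A i j).
  move=> Aij; rewrite /B /D !mxE (negbTE Aij) mulr0 add0r.
  apply: sign_pert; apply: (le_lt_trans (mx_entry_le F i j)).
  apply: (le_lt_trans hF); apply: (lt_le_trans _ (aA i j Aij)).
  by rewrite /r mulrA (mulrC C1).
have Bnz i j : A i j != 0 -> B i j != 0.
  move=> Aij; apply/eqP => B0; have := sgnB i j Aij; rewrite B0 sign_of0.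
  by move=> /esym /sign_of_eq0 /eqP; rewrite (negbTE Aij).
exists B; split; [|split].
- move=> i j; case: (eqVneq (A i j) 0) => Aij.
    rewrite /B /D !mxE Aij eqxx hFZ // add0r addr0; exact: sign_of_sc.
  rewrite sgnB // hQ; apply/esym/hsup.
  by rewrite -hQ => /sign_of_eq0 /eqP; rewrite (negbTE Aij).
- by exists S; split => //; rewrite -BS mulmxK.
move=> X hX cX.
have BE : B = A + D by [].
have nD : `|D| <= eps + C1 * r by rewrite /D (le_trans (ler_normD _ _)) // lerD.
clearbody B D.
pose W := Gi X; pose K' := Lst A W; pose F' := mask A W.
have XE : K' *m A - A *m K' + F' = X by rewrite -[RHS](GiE X).
have hK' : `|K'| <= C1 * `|X| by rewrite /K' /W -KfE KfN.
have hXz i j : A i j != 0 -> X i j = 0.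
  move=> Aij; move/matrixP: hX => /(_ i j); rewrite [LHS]mxE [RHS]mxE => /eqP.
  by rewrite mulf_eq0 (negbTE (Bnz i j Aij)) /= => /eqP.
have trF : \tr (X^T *m F') = 0.
  rewrite tr_tmul big1 // => i _; rewrite big1 // => l _; rewrite mxE.
  by case: eqVneq => [_|/hXz ->]; rewrite ?mulr0 ?mul0r.
clearbody K' F' W.
pose Z := K' *m D - D *m K'.
have key : \tr (X^T *m X) = - \tr (X^T *m Z).
  have eA : K' *m A - A *m K' = (K' *m B - B *m K') - Z.
    rewrite /Z BE mulmxDr mulmxDl.
    set u1 := K' *m A; set u2 := K' *m D; set u3 := A *m K'; set u4 := D *m K'.
    by apply/matrixP => i j; rewrite !mxE; ring.
  rewrite -{2}XE mulmxDr mxtraceD trF addr0 eA mulmxBr raddfB /= dot_comm cX.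
  by rewrite mul0mx raddf0 sub0r.
have nZ : `|Z| <= 2 * k * (C1 * `|X|) * (eps + C1 * r).
  rewrite /Z (le_trans (normB_le _ _)) //.
  have h1 := mulmx_norm K' D; have h2 := mulmx_norm D K'.
  have h3 : k * `|K'| * `|D| <= k * (C1 * `|X|) * (eps + C1 * r).
    exact: prod_bound.
  have h4 : k * `|D| * `|K'| <= k * (eps + C1 * r) * (C1 * `|X|).
    exact: prod_bound.
  rewrite -/k in h1 h2; lra.
have ntr : - \tr (X^T *m Z) <= k * (k * `|X| * `|Z|).
  rewrite (le_trans (ler_norm _)) // normrN (le_trans (tr_norm _)) // -/k.
  rewrite ler_wpM2l // (le_trans (mulmx_norm _ _)) // -/k.
  rewrite -!mulrA ler_wpM2l //; apply: ler_wpM2r => //; exact: trmx_norm.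
have hsq := sq_le_tr X.
have fin : `|X| ^+ 2 <= (k * k * (2 * k * C1 * (1 + 2 * C1)) * eps) * `|X| ^+ 2.
  have ee2 : k * (k * `|X| * (2 * k * (C1 * `|X|) * (eps + C1 * r)))
      = (k * k * (2 * k * C1 * (1 + 2 * C1)) * eps) * `|X| ^+ 2 by rewrite /r; ring.
  have ee3 : k * (k * `|X| * `|Z|) <= k * (k * `|X| * (2 * k * (C1 * `|X|) * (eps + C1 * r))).
    apply: ler_wpM2l => //; apply: ler_wpM2l => //; exact: mulr_ge0.
  lra.
have := small_zero _ _ (sqr_ge0 `|X|) hc5 fin.
by move/eqP; rewrite sqrf_eq0 normr_eq0 => /eqP.
Qed.
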